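(* Let $D\subset\mathbb{R}^d$ be measurable, $k$ a measurable positive definite kernel with the integrals below finite, and $r:D\to[0,\infty)$. Let $\bar{\mathbf{x}}_1,\dots,\bar{\mathbf{x}}_n\in D$ be distinct with replicate counts $a_1,\dots,a_n\ge1$, $N=\sum_i a_i$; let $\mathbf{K}_{(N,n)}$ be the $n\times n$ matrix with entries $k(\bar{\mathbf{x}}_i,\bar{\mathbf{x}}_j)+\delta_{ij}r(\bar{\mathbf{x}}_i)/a_i$ (assumed invertible), $\mathbf{k}_n(\mathbf{x})=(k(\mathbf{x},\bar{\mathbf{x}}_i))_{i=1}^n$, $\mathbf{W}_n$ the matrix with entries $\int_D k(\bar{\mathbf{x}}_i,\mathbf{x})k(\bar{\mathbf{x}}_j,\mathbf{x})\,d\mathbf{x}$, $E=\int_D k(\mathbf{x},\mathbf{x})\,d\mathbf{x}$, and $I_N=\int_D\big(k(\mathbf{x},\mathbf{x})-\mathbf{k}_n(\mathbf{x})^\top\mathbf{K}_{(N,n)}^{-1}\mathbf{k}_n(\mathbf{x})\big)d\mathbf{x}$. For $k\in\{1,\dots,n\}$ with $r(\bar{\mathbf{x}}_k)>0$, let $I_{N+1}(\bar{\mathbf{x}}_k)$ denote the same integral computed for the design in which $a_k$ is replaced by $a_k+1$ (one additional replicate at $\bar{\mathbf{x}}_k$), and let $$\mathbf{B}_k=\frac{(\mathbf{K}_{(N,n)}^{-1})_{\cdot,k}(\mathbf{K}_{(N,n)}^{-1})_{k,\cdot}}{a_k(a_k+1)/r(\bar{\mathbf{x}}_k)-(\mathbf{K}_{(N,n)}^{-1})_{k,k}}$$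 (denominator assumed nonzero). Then $$I_{N+1}(\bar{\mathbf{x}}_k)=I_N-\mathrm{tr}(\mathbf{B}_k\mathbf{W}_n).$$
   Context: Setting: Gaussian process regression with zero-mean GP prior with kernel $k$ and independent Gaussian noise of variance $r(\mathbf{x})$, with $a_i$ replicates at unique site $\bar{\mathbf{x}}_i$; $I_N$ is the integrated mean-squared prediction error (integral over $D$ of the de-noised posterior variance). $(\cdot)_{\cdot,k}$, $(\cdot)_{k,\cdot}$ denote the $k$-th column and row, $\delta_{ij}$ the Kronecker delta. *)

(* Defs.v *)
From HB Require Import structures.
From mathcomp Require Import all_boot all_order all_algebra.
From mathcomp Require Import all_classical all_reals all_analysis.
Set Implicit Arguments. Unset Strict Implicit. Unset Printing Implicit Defensive.
Import Order.TTheory GRing.Theory Num.Theory.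
Local Open Scope classical_set_scope.
Local Open Scope ring_scope.

Definition posdef_kernel (T : Type) (R : realType) (k : T -> T -> R) : Prop :=
  (forall x y, k x y = k y x) /\
  (forall (m : nat) (x : 'I_m -> T) (c : 'I_m -> R),
      injective x -> (exists i, c i != 0) ->
      0 < \sum_(i < m) \sum_(j < m) c i * c j * k (x i) (x j)).

Definition Kmat (T : Type) (R : realType) (n : nat) (k : T -> T -> R)
  (r : T -> R) (xb : 'I_n -> T) (a : 'I_n -> nat) : 'M[R]_n :=
  \matrix_(i, j) (k (xb i) (xb j) + (i == j)%:R * (r (xb i) / (a i)%:R)).

Definition kvec (T : Type) (R : realType) (n : nat) (k : T -> T -> R)
  (xb : 'I_n -> T) (x : T) : 'cV[R]_n := \col_i k x (xb i).

Definition Wmat d (T : measurableType d) (R : realType)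
  (mu : {measure set T -> \bar R}) (D : set T) (n : nat)
  (k : T -> T -> R) (xb : 'I_n -> T) : 'M[R]_n :=
  \matrix_(i, j) Rintegral mu D (fun x => k (xb i) x * k (xb j) x).

Definition IMSPE d (T : measurableType d) (R : realType)
  (mu : {measure set T -> \bar R}) (D : set T) (n : nat)
  (k : T -> T -> R) (r : T -> R) (xb : 'I_n -> T) (a : 'I_n -> nat) : R :=
  Rintegral mu D (fun x =>
    k x x - ((kvec k xb x)^T *m invmx (Kmat k r xb a) *m kvec k xb x) 0 0).

Definition add_replicate (n : nat) (a : 'I_n -> nat) (l : 'I_n) : 'I_n -> nat :=
  fun i => if i == l then (a i).+1 else a i.

Definition Bmat (R : realType) (n : nat) (Kinv : 'M[R]_n) (a : 'I_n -> nat)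
  (rl : R) (l : 'I_n) : 'M[R]_n :=
  ((a l)%:R * ((a l).+1)%:R / rl - Kinv l l)^-1 *: (col l Kinv *m row l Kinv).

(* Main.v *)
Require Import Defs.
From HB Require Import structures.
From mathcomp Require Import all_boot all_order all_algebra.
From mathcomp Require Import all_classical all_reals all_analysis.
From mathcomp Require Import ring lra.
Import Order.TTheory GRing.Theory Num.Theory.
Local Open Scope classical_set_scope.
Local Open Scope ring_scope.

Lemma Rint_sum (R : realType) (d : measure_display) (T : measurableType d)
  (mu : {measure set T -> \bar R}) (D : set T) (I : Type) (s : seq I)
  (f : I -> T -> R) :
  measurable D -> (forall i, mu.-integrable D (EFin \o f i)) ->
  mu.-integrable D (EFin \o (fun x => \sum_(i <- s) f i x)) /\
  Rintegral mu D (fun x => \sum_(i <- s) f i x) = \sum_(i <- s) Rintegral mu D (f i).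
Proof.
move=> mD hf; elim: s => [|i s [IH1 IH2]].
  have -> : (fun x => \sum_(i <- [::]) f i x) = cst (0:R).
    by apply/funext => x; rewrite big_nil.
  split.
    have -> : EFin \o cst (0:R) = cst 0%E :> (T -> \bar R) by apply/funext => x.
    exact: integrable0.
  by rewrite Rintegral_cst // mul0r big_nil.
have E : (fun x => \sum_(j <- i :: s) f j x) = (fun x => f i x + \sum_(j <- s) f j x).
  by apply/funext => x; rewrite big_cons.
rewrite E big_cons; split.
  exact: (integrableD mD (hf i) IH1).
by rewrite RintegralD // IH2.
Qed.
Arguments Rint_sum {R d T mu D I} s {f}.

Lemma quad_expand (R : realType) (T : Type) (k : T -> T -> R) (n : nat)
  (xb : 'I_n -> T) (M : 'M[R]_n) (x : T) :
  (forall x y, k x y = k y x) ->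
  ((kvec k xb x)^T *m M *m kvec k xb x) 0 0 =
  \sum_(i < n) \sum_(j < n) M i j * (k (xb i) x * k (xb j) x).
Proof.
move=> ks; rewrite !mxE.
under eq_bigr do rewrite !mxE big_distrl.
rewrite exchange_big; apply: eq_bigr => i _; apply: eq_bigr => j _.
rewrite !mxE (ks x (xb i)) (ks x (xb j)). 
by rewrite /= mulrCA mulrA.
Qed.

Lemma quad_int (R : realType) (d : measure_display) (T : measurableType d)
  (mu : {measure set T -> \bar R}) (D : set T) (k : T -> T -> R)
  (n : nat) (xb : 'I_n -> T) (M : 'M[R]_n) :
  measurable D -> (forall x y, k x y = k y x) ->
  (forall i j, mu.-integrable D (fun x => (k (xb i) x * k (xb j) x)%:E)) ->
  Rintegral mu D (fun x => ((kvec k xb x)^T *m M *m kvec k xb x) 0 0) =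
  \tr (M *m Wmat mu D k xb).
Proof.
move=> mD ks hi.
have -> : (fun x => ((kvec k xb x)^T *m M *m kvec k xb x) 0 0) =
  (fun x => \sum_(i < n) \sum_(j < n) M i j * (k (xb i) x * k (xb j) x)).
  by apply/funext => x; exact: quad_expand.
have hij : forall i j, mu.-integrable D
   (EFin \o (fun x => M i j * (k (xb i) x * k (xb j) x))).
  move=> i j; exact: (integrableZl mD (M i j) (hi i j)).
have hi' : forall i, mu.-integrable D
   (EFin \o (fun x => \sum_(j < n) M i j * (k (xb i) x * k (xb j) x))).
  by move=> i; case: (Rint_sum (index_enum 'I_n) mD (hij i)).
case: (Rint_sum (index_enum 'I_n) mD hi') => _ ->.
rewrite /mxtrace; apply: eq_bigr => i _.
case: (Rint_sum (index_enum 'I_n) mD (hij i)) => _ ->.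
rewrite mxE; apply: eq_bigr => j _.
rewrite RintegralZl //; last exact: hi.
rewrite mxE; congr (_ * _); apply: eq_Rintegral => x _; exact: mulrC.
Qed.

Lemma quad_integrable (R : realType) (d : measure_display) (T : measurableType d)
  (mu : {measure set T -> \bar R}) (D : set T) (k : T -> T -> R)
  (n : nat) (xb : 'I_n -> T) (M : 'M[R]_n) :
  measurable D -> (forall x y, k x y = k y x) ->
  (forall i j, mu.-integrable D (fun x => (k (xb i) x * k (xb j) x)%:E)) ->
  mu.-integrable D (EFin \o (fun x => ((kvec k xb x)^T *m M *m kvec k xb x) 0 0)).
Proof.
move=> mD ks hi.
have -> : (fun x => ((kvec k xb x)^T *m M *m kvec k xb x) 0 0) =
  (fun x => \sum_(i < n) \sum_(j < n) M i j * (k (xb i) x * k (xb j) x)).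
  by apply/funext => x; exact: quad_expand.
have hij : forall i j, mu.-integrable D
   (EFin \o (fun x => M i j * (k (xb i) x * k (xb j) x))).
  move=> i j; exact: (integrableZl mD (M i j) (hi i j)).
have hi' : forall i, mu.-integrable D
   (EFin \o (fun x => \sum_(j < n) M i j * (k (xb i) x * k (xb j) x))).
  by move=> i; case: (Rint_sum (index_enum 'I_n) mD (hij i)).
by case: (Rint_sum (index_enum 'I_n) mD hi').
Qed.

Lemma key_alg (R: fieldType) (A r q : R): A != 0 -> A+1 != 0 -> r != 0 -> A*(A+1)/r - q != 0 ->
 (A*(A+1)/r - q)^-1 - (r/A - r/(A+1)) - (r/A - r/(A+1)) * (A*(A+1)/r - q)^-1 * q = 0.
Proof.
move=> A0 A10 r0 t0.
move: t0; set t := A*(A+1)/r - q => t0.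
have qE : q = A*(A+1)/r - t by rewrite /t; ring.
rewrite qE; field.
by rewrite t0 A0 A10 r0.
Qed.

Lemma SM (R : realType) (T : Type) (k : T -> T -> R) (r : T -> R)
  (n : nat) (xb : 'I_n -> T) (a : 'I_n -> nat) (l : 'I_n) :
  (0 < a l)%N -> Kmat k r xb a \in unitmx -> 0 < r (xb l) ->
  (a l)%:R * ((a l).+1)%:R / r (xb l) - (invmx (Kmat k r xb a)) l l != 0 ->
  invmx (Kmat k r xb (add_replicate a l)) =
    invmx (Kmat k r xb a) + Bmat (invmx (Kmat k r xb a)) a (r (xb l)) l.
Proof.
move=> al0 Ku r0 t0.
set K := Kmat k r xb a; set Ki := invmx K.
set A : R := (a l)%:R.
have A0 : A != 0 by rewrite pnatr_eq0 -lt0n.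
have A10 : A + 1 != 0 by rewrite /A natr1 pnatr_eq0.
have r0' : r (xb l) != 0 by rewrite gt_eqF.
set c : R := r (xb l) / A - r (xb l) / (A + 1).
have EK : Kmat k r xb (add_replicate a l) = K - c *: delta_mx l l.
  apply/matrixP => i j; rewrite !mxE /add_replicate.
  case: (eqVneq i l) => [->|il]; case: (eqVneq j l) => [->|jl] /=;
    rewrite ?eqxx ?mulr1 ?mulr0 ?subr0 //.
    rewrite /c /A natr1; ring.
  by rewrite !mul0r.
set e : 'cV[R]_n := delta_mx l 0.
set f : 'rV[R]_n := delta_mx 0 l.
set u := col l Ki; set v := row l Ki.
set q := Ki l l.
set s := (A * ((a l).+1)%:R / r (xb l) - q)^-1.
have Bdef : Bmat Ki a (r (xb l)) l = s *: (u *m v) by [].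
have Ku' : K *m u = e by rewrite /u colE mulmxA mulmxV // mul1mx.
have fKi : f *m Ki = v by rewrite /v rowE.
have fu : f *m u = q%:M.
  apply/matrixP => i j; rewrite !ord1 !mxE.
  rewrite (bigD1 l) //= big1 ?addr0; first by rewrite !mxE !eqxx mul1r.
  by move=> m ml; rewrite !mxE (negbTE ml) andbF mul0r.
have Eef : delta_mx l l = e *m f by rewrite mul_delta_mx.
have key : s - c - c * s * q = 0.
  have t0' : A * (A + 1) / r (xb l) - q != 0 by move: t0; rewrite /A natr1.
  move: (@key_alg _ A (r (xb l)) q A0 A10 r0' t0'); rewrite /s /c /A natr1 => ->.
  done.
have H1 : Kmat k r xb (add_replicate a l) *m (Ki + Bmat Ki a (r (xb l)) l) = 1%:M.
  rewrite EK Bdef Eef mulmxBl !mulmxDr mulmxV //.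
  rewrite -?scalemxAr -?scalemxAl -?scalemxAr -?scalemxAl (mulmxA K u v) Ku' -(mulmxA e f Ki) fKi -(mulmxA e f) (mulmxA f u v) fu mul_scalar_mx -scalemxAr !scalerA.
  rewrite -scalerDl -addrA -scalerBl.
  have -> : s - (c + s * c * q) = 0 by rewrite opprD addrA (mulrC s c) key.
  by rewrite scale0r addr0.
have [Ku2 _] := mulmx1_unit H1.
by rewrite -[RHS]mul1mx -(mulVmx Ku2) -mulmxA H1 mulmx1.
Qed.

Arguments SM {R T k r n xb a l}.
Arguments quad_int {R d T mu D k n xb} M.
Arguments quad_integrable {R d T mu D k n xb} M.

Theorem mainTheorem3 (R : realType) (d : measure_display) (T : measurableType d)
  (mu : {measure set T -> \bar R}) (D : set T) (k : T -> T -> R) (r : T -> R)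
  (n : nat) (xb : 'I_n -> T) (a : 'I_n -> nat) (l : 'I_n) :
  measurable D ->
  posdef_kernel k ->
  measurable_fun setT (fun p : T * T => k p.1 p.2) ->
  mu.-integrable D (fun x => (k x x)%:E) ->
  (forall i j, mu.-integrable D (fun x => (k (xb i) x * k (xb j) x)%:E)) ->
  (forall x, D x -> 0 <= r x) ->
  (forall i, D (xb i)) ->
  injective xb ->
  (forall i, (0 < a i)%N) ->
  Kmat k r xb a \in unitmx ->
  0 < r (xb l) ->
  (a l)%:R * ((a l).+1)%:R / r (xb l) - (invmx (Kmat k r xb a)) l l != 0 ->
  IMSPE mu D k r xb (add_replicate a l) =
    IMSPE mu D k r xb a
    - \tr (Bmat (invmx (Kmat k r xb a)) a (r (xb l)) l *m Wmat mu D k xb).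
Proof.
move=> mD [ks _] _ hkk hi _ _ _ apos Ku r0 t0.
rewrite /IMSPE (SM (apos l) Ku r0 t0).
set Ki := invmx (Kmat k r xb a).
set B := Bmat Ki a (r (xb l)) l.
have -> : (fun x => k x x - ((kvec k xb x)^T *m (Ki + B) *m kvec k xb x) 0 0) =
  (fun x => k x x - (((kvec k xb x)^T *m Ki *m kvec k xb x) 0 0
                    + ((kvec k xb x)^T *m B *m kvec k xb x) 0 0)).
  by apply/funext => x; rewrite mulmxDr mulmxDl mxE.
have iK := quad_integrable Ki mD ks hi.
have iB := quad_integrable B mD ks hi.
have ikk : mu.-integrable D (EFin \o (fun x => k x x)) by exact: hkk.
rewrite (RintegralB mD ikk (integrableD mD iK iB)).
rewrite (RintegralD mD iK iB) (RintegralB mD ikk iK) !quad_int //.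
by rewrite opprD addrA.
Qed.
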